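(* Let $p$ be a prime and let $a_{g-1},\dots,a_0$ be integers with $|a_{g-1}p|>2g$ and $a_0$ not divisible by $p$. Set $q(x)=x^g+a_{g-1}px^{g-1}+\cdots+a_1px+a_0p$. Then $\mathrm{sym}(q)(x)=x^g\,q\!\left(x+\frac1x\right)$ satisfies the homological criterion, i.e. it is symplectically irreducible, is not a cyclotomic polynomial, and is not a polynomial in $x^k$ for any $k>1$.
   Context: A symplectic polynomial is an even-degree integer polynomial that is monic and palindromic (equivalently, the characteristic polynomial of an element of $\mathrm{Sp}(2n,\mathbb{Z})$). A symplectic polynomial is symplectically irreducible if it is not a product of two nontrivial symplectic polynomials. A cyclotomic polynomial is the minimal polynomial over $\mathbb{Q}$ of a primitive $n$-th root of unity. *)

(* Defs.v *)
From HB Require Import structures.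
From mathcomp Require Import all_boot all_order all_algebra all_field.
Set Implicit Arguments. Unset Strict Implicit. Unset Printing Implicit Defensive.
Import Order.TTheory GRing.Theory Num.Theory.
Local Open Scope ring_scope.

Definition palindromic (p : {poly int}) : Prop :=
  forall i : nat, (i <= (size p).-1)%N -> p`_i = p`_((size p).-1 - i).

Definition symplectic (p : {poly int}) : Prop :=
  p \is monic /\ ~~ odd (size p).-1 /\ palindromic p.

Definition symplectically_irreducible (p : {poly int}) : Prop :=
  symplectic p /\ (1 < size p)%N /\
  ~ (exists f h : {poly int}, symplectic f /\ symplectic h /\
        (1 < size f)%N /\ (1 < size h)%N /\ p = f * h).

(* p is the minimal polynomial over Q of a primitive n-th root of unity;
   MathComp's 'Phi_n is this polynomial (with integer coefficients) *)
Definition is_cyclotomic (p : {poly int}) : Prop :=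
  exists2 n : nat, (0 < n)%N & p = 'Phi_n.

Definition poly_in_Xk (p : {poly int}) (k : nat) : Prop :=
  exists r : {poly int}, p = r \Po 'X^k.

(* sym(q)(x) = x^g q(x + 1/x), g = deg q *)
Definition symp (q : {poly int}) : {poly int} :=
  \sum_(i < size q) q`_i *: ('X^((size q).-1 - i) * ('X^2 + 1) ^+ i).

Definition homological_criterion (p : {poly int}) : Prop :=
  symplectically_irreducible p /\ ~ is_cyclotomic p /\
  (forall k : nat, (1 < k)%N -> ~ poly_in_Xk p k).

(* Main.v *)
Require Import Defs.
From mathcomp Require Import all_boot all_order all_algebra all_field.
From mathcomp Require Import zify ring lra.
Import Order.TTheory GRing.Theory Num.Theory.
Set Implicit Arguments. Unset Strict Implicit. Unset Printing Implicit Defensive.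
Local Open Scope ring_scope.


Definition S (m : nat) (r : {poly int}) : {poly int} :=
  \sum_(i < m.+1) r`_i *: ('X^(m - i) * ('X^2 + 1) ^+ i).

Definition ev (P : {poly int}) (x : rat) : rat := (map_poly (intr : int -> rat) P).[x].

Lemma S_rec m r : S m.+1 r = r`_m.+1 *: ('X^2 + 1) ^+ m.+1 + 'X * S m r.
Proof.
rewrite /S big_ord_recr /= subnn expr0 mul1r addrC; congr (_ + _).
rewrite mulr_sumr; apply: eq_bigr => i _.
rewrite /= subSn; last exact: ltn_ord i.
by rewrite exprS -scalerAr mulrA.
Qed.

Lemma S0 r : S 0 r = (r`_0)%:P.
Proof. by rewrite /S big_ord1 subnn expr0 mulr1 -alg_polyC. Qed.

Lemma S_lin m a b : S m (a - b) = S m a - S m b.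
Proof. by rewrite /S -sumrB; apply: eq_bigr => i _; rewrite coefB scalerBl. Qed.

Lemma S_eqcoef m (r r' : {poly int}) : (forall i, (i <= m)%N -> r`_i = r'`_i) -> S m r = S m r'.
Proof. by move=> H; rewrite /S; apply: eq_bigr => i _; rewrite H // -ltnS. Qed.

Lemma ev_size P : size (map_poly (intr : int -> rat) P) = size P.
Proof. by apply: size_map_inj_poly => //; apply: intr_inj. Qed.

Lemma mapX : map_poly (intr : int -> rat) 'X = 'X.
Proof. by apply/polyP => j; rewrite coef_map !coefX; case: (j == 1)%N. Qed.

Lemma evS m (r : {poly int}) (x : rat) : x != 0 -> (size r <= m.+1)%N ->
  ev (S m r) x = x ^+ m * ev r (x + x^-1).
Proof.
move=> x0 sr; rewrite /ev /S rmorph_sum horner_sum.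
rewrite (horner_coef_wide (n := m.+1) (p := map_poly _ r)) ?ev_size // mulr_sumr.
apply: eq_bigr => i _.
rewrite /= map_polyZ /= rmorphM /= !(rmorphXn, rmorphD, map_polyX, rmorph1) /=.
rewrite mapX !hornerE coef_map /=.
have -> : x ^+ m = x ^+ (m - i) * x ^+ i by rewrite -exprD subnK // -ltnS.
have -> : x ^+ 2 + 1 = x * (x + x^-1) by rewrite mulrDr mulfV // expr2.
rewrite exprMn; ring.
Qed.

Lemma evB P Q x : ev (P - Q) x = ev P x - ev Q x.
Proof. by rewrite /ev rmorphB /= hornerD hornerN. Qed.

Lemma evM P Q x : ev (P * Q) x = ev P x * ev Q x.
Proof. by rewrite /ev rmorphM /= hornerE. Qed.

Lemma evXn n x : ev ('X^n) x = x ^+ n.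
Proof. by rewrite /ev rmorphXn /= mapX hornerXn. Qed.

Lemma evX2 n x : ev (('X^2 + 1) ^+ n) x = (x ^+ 2 + 1) ^+ n.
Proof. by rewrite /ev rmorphXn rmorphD rmorphXn rmorph1 /= mapX !hornerE. Qed.

Lemma evZ c P x : ev (c *: P) x = c%:~R * ev P x.
Proof. by rewrite /ev map_polyZ hornerE. Qed.

Lemma evXM P x : ev ('X * P) x = x * ev P x.
Proof. by rewrite evM -(expr1 'X) evXn expr1. Qed.

Lemma poly_eq0_pos (P : {poly int}) : (forall x : rat, 0 < x -> ev P x = 0) -> P = 0.
Proof.
move=> H.
have Hm : map_poly (intr : int -> rat) P = 0.
  apply: (roots_geq_poly_eq0 (rs := [seq (i.+1)%:R | i <- iota 0 (size P)])).
  - by apply/allP => y /mapP [i _ ->]; rewrite /root; apply/eqP/H; rewrite ltr0Sn.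
  - rewrite map_inj_uniq ?iota_uniq // => a b /eqP; rewrite eqr_nat eqSS => /eqP //.
  - by rewrite size_map size_iota ev_size.
apply/polyP => i; have := congr1 (fun q : {poly rat} => q`_i) Hm.
rewrite coef_map => E; have : (P`_i)%:~R == 0 :> rat by rewrite E coef0.
by rewrite coef0 intr_eq0 => /eqP.
Qed.

Definition rev (n : nat) (f : {poly int}) : {poly int} :=
  \sum_(i < n.+1) f`_i *: 'X^(n - i).

Lemma coef_rev n (f : {poly int}) k : (rev n f)`_k = if (k <= n)%N then f`_(n - k) else 0.
Proof.
rewrite /rev coef_sum.
under eq_bigr do rewrite coefZ coefXn.
case: leqP => kn.
  have Hk : (n - k < n.+1)%N by rewrite ltnS leq_subr.
  rewrite (bigD1 (Ordinal Hk)) //= subKn // eqxx mulr1 big1 ?addr0 //.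
  move=> j /eqP Hj; case: eqP => [Ek|]; last by rewrite mulr0.
  exfalso; apply: Hj; apply: val_inj => /=.
  have := ltn_ord j; lia.
rewrite big1 // => j _; case: eqP => [Ek|]; last by rewrite mulr0.
have := ltn_ord j; lia.
Qed.

Lemma ev_rev n (f : {poly int}) (x : rat) : x != 0 -> (size f <= n.+1)%N ->
  ev (rev n f) x = x ^+ n * ev f x^-1.
Proof.
move=> x0 sf; rewrite /ev /rev rmorph_sum horner_sum.
rewrite (horner_coef_wide (n := n.+1) (p := map_poly _ f)) ?ev_size // mulr_sumr.
apply: eq_bigr => i _.
rewrite /= map_polyZ /= rmorphXn /= mapX !hornerE coef_map /=.
have -> : x ^+ n = x ^+ (n - i) * x ^+ i by rewrite -exprD subnK // -ltnS.
rewrite exprVn; field; by rewrite expf_neq0.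
Qed.

Definition EP n (f : {poly int}) := (size f <= n.+1)%N /\
  forall x : rat, 0 < x -> x ^+ n * ev f x^-1 = ev f x.

Lemma EP_rev n (f : {poly int}) : EP n f -> rev n f = f.
Proof.
move=> [sf H]; apply/eqP; rewrite -subr_eq0; apply/eqP/poly_eq0_pos => x x0.
by rewrite evB ev_rev ?H ?subrr // gt_eqF.
Qed.

Lemma pal_of_EP n (f : {poly int}) : EP n f -> forall k, (k <= n)%N -> f`_k = f`_(n - k).
Proof. by move=> H k kn; rewrite -{1}(EP_rev H) coef_rev kn. Qed.

Lemma EP_of_pal n (f : {poly int}) : (size f <= n.+1)%N ->
  (forall k, (k <= n)%N -> f`_k = f`_(n - k)) -> EP n f.
Proof.
move=> sf H.
have E : rev n f = f.
  apply/polyP => k; rewrite coef_rev; case: leqP => kn; first by rewrite -H.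
  by rewrite nth_default // (leq_trans sf).
split=> // x x0; by rewrite -{2}E ev_rev // gt_eqF.
Qed.



Notation U := ('X^2 + 1 : {poly int}).

Lemma U_monic k : U ^+ k \is monic.
Proof. by apply: monic_exp; rewrite -polyC1 monicXnaddC. Qed.

Lemma U_size k : size (U ^+ k) = (2 * k).+1.
Proof.
have := size_exp U k; rewrite -polyC1 size_XnaddC //= => E.
rewrite -[LHS]prednK; first by rewrite E mulnC.
by rewrite size_poly_gt0 -lead_coef_eq0 polyC1 (monicP (U_monic k)) oner_neq0.
Qed.

Lemma U_top k : (U ^+ k)`_(2 * k) = 1.
Proof. by have := monicP (U_monic k); rewrite lead_coefE U_size. Qed.

Lemma U_0 k : (U ^+ k)`_0 = 1.
Proof. by rewrite -horner_coef0 horner_exp !hornerE expr1n. Qed.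

Lemma U_comp k : U ^+ k = ('X + 1) ^+ k \Po 'X^2.
Proof.
elim: k => [|k IH]; first by rewrite !expr0 -polyC1 comp_polyC.
by rewrite (exprS U k) (exprS ('X + 1) k) comp_polyM -IH comp_polyD comp_polyX -polyC1 comp_polyC.
Qed.

Lemma U_odd k j : odd j -> (U ^+ k)`_j = 0.
Proof.
move=> oj; rewrite U_comp coef_comp_poly_Xn //.
by case: ifP => // /dvdn_odd; rewrite oj /= => /(_ isT).
Qed.

Lemma size_le_pred (d : {poly int}) n : (size d <= n.+1)%N -> d`_n = 0 -> (size d <= n)%N.
Proof.
move=> sd dn; apply/leq_sizeP => j jn.
case: (ltngtP j n) => [|E|E]; first by lia.
  by rewrite nth_default // (leq_trans sd).
by rewrite E.
Qed.

Lemma S_size m r : (size (S m r) <= (2 * m).+1)%N.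
Proof.
elim: m => [|m IH]; first by rewrite S0 size_polyC; case: (_ != 0).
rewrite S_rec; apply: (leq_trans (size_add _ _)); rewrite geq_max; apply/andP; split.
  by apply: (leq_trans (size_scale_leq _ _)); rewrite U_size.
apply: (leq_trans (size_mul_leq _ _)); rewrite size_polyX; lia.
Qed.

Lemma S_top m r : (S m r)`_(2 * m) = r`_m.
Proof.
case: m => [|m]; first by rewrite S0 coefC.
rewrite S_rec coefD coefZ U_top mulr1 coefXM.
have -> : (2 * m.+1 == 0)%N = false by lia.
rewrite [(S m r)`_ _]nth_default ?addr0 //.
apply: (leq_trans (S_size m r)); lia.
Qed.

Lemma S_sub m r : (S m.+1 r)`_(2 * m).+1 = r`_m.
Proof.
rewrite S_rec coefD coefZ U_odd /=; last by rewrite /= oddM.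
by rewrite mulr0 add0r coefXM /= S_top.
Qed.

Lemma S_coef0 m r : (S m r)`_0 = r`_m.
Proof.
case: m => [|m]; first by rewrite S0 coefC.
by rewrite S_rec coefD coefZ U_0 mulr1 coefXM /= addr0.
Qed.

Lemma S_inj0 m (d : {poly int}) : (size d <= m.+1)%N -> S m d = 0 -> d = 0.
Proof.
elim: m d => [|m IH] d sd.
  move=> H; rewrite (size1_polyC sd); move: H; rewrite S0 => /eqP; rewrite polyC_eq0 => /eqP ->; exact: polyC0.
move=> H0.
have dm : d`_m.+1 = 0 by rewrite -S_coef0 H0 coef0.
move: H0; rewrite S_rec dm scale0r add0r => /eqP; rewrite mulf_eq0 polyX_eq0 /= => /eqP.
by apply: IH; apply: size_le_pred.
Qed.

Lemma S_mul m n (r s : {poly int}) : (size r <= m.+1)%N -> (size s <= n.+1)%N ->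
  S m r * S n s = S (m + n) (r * s).
Proof.
move=> sr ss; apply/eqP; rewrite -subr_eq0; apply/eqP/poly_eq0_pos => x x0.
have x0' : x != 0 by rewrite gt_eqF.
rewrite evB evM !evS // ?evM ?exprD; first by ring.
apply: (leq_trans (size_mul_leq _ _)); lia.
Qed.


Lemma S_exists m (f : {poly int}) : EP (2 * m) f ->
  exists r : {poly int}, (size r <= m.+1)%N /\ r`_m = f`_(2 * m) /\ f = S m r.
Proof.
elim: m f => [|m IH] f.
  move=> [sf _]; exists f; split => //; split => //.
  by rewrite S0 -(size1_polyC sf).
move=> Hf; have [sf Hfx] := Hf.
set c := f`_(2 * m.+1).
set g1 := f - c *: U ^+ m.+1.
have Hg : EP (2 * m.+1) g1.
  split.
    rewrite /g1; apply: (leq_trans (size_add _ _)); rewrite geq_max sf /= size_opp.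
    by apply: (leq_trans (size_scale_leq _ _)); rewrite U_size.
  move=> x x0; rewrite /g1 !evB !evZ !evX2 -(Hfx x x0) mulrBr; congr (_ - _).
  rewrite mulrCA; congr (_ * _).
  have x0' : x != 0 by rewrite gt_eqF.
  rewrite exprM -exprMn; congr (_ ^+ _); rewrite exprVn; field.
  by [].
have g1top : g1`_(2 * m.+1) = 0.
  by rewrite /g1 coefB coefZ U_top mulr1 subrr.
have g10 : g1`_0 = 0 by rewrite (pal_of_EP Hg) // subn0.
have sg1 : (size g1 <= (2 * m.+1))%N.
  by apply: size_le_pred => //; case: Hg.
set f2 := \poly_(i < (2 * m).+1) g1`_i.+1.
have Eg : g1 = 'X * f2.
  apply/polyP => k; rewrite coefXM; case: k => [|k] //=.
  rewrite coef_poly; case: ifP => // /negbT; rewrite -leqNgt => kk.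
  by rewrite nth_default // (leq_trans sg1) //; lia.
have Hf2 : EP (2 * m) f2.
  split; first exact: size_poly.
  move=> x x0; have x0' : x != 0 by rewrite gt_eqF.
  have := (proj2 Hg) x x0; rewrite Eg !evXM => E.
  apply: (mulfI x0'); rewrite -E.
  have -> : (2 * m.+1 = (2 * m).+2)%N by lia.
  rewrite !exprS; field; exact: x0'.
have [r2 [sr2 [_ Ef2]]] := IH f2 Hf2.
exists (r2 + c *: 'X^(m.+1)); split.
  apply: (leq_trans (size_add _ _)); rewrite geq_max (leq_trans sr2) //=.
  by apply: (leq_trans (size_scale_leq _ _)); rewrite size_polyXn.
have r2m : r2`_m.+1 = 0 by rewrite nth_default.
split; first by rewrite coefD coefZ coefXn eqxx mulr1 r2m add0r.
rewrite S_rec coefD coefZ coefXn eqxx mulr1 r2m add0r.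
rewrite (@S_eqcoef m _ r2); last first.
  by move=> i im; rewrite coefD coefZ coefXn; case: eqP => [|_]; [lia | rewrite mulr0 addr0].
by rewrite -Ef2 -Eg /g1 addrC subrK.
Qed.


Lemma eisen (p : nat) (r s : {poly int}) m n : prime p -> (0 < m)%N -> (0 < n)%N ->
  r`_m = 1 -> s`_n = 1 ->
  (forall i, (i < m + n)%N -> (p%:Z %| (r * s)`_i)%Z) ->
  ~~ (p%:Z * p%:Z %| (r * s)`_0)%Z -> False.
Proof.
move=> pp m0 n0 rm sn Hlow H0.
have np1 : forall x : int, (p%:Z %| x)%Z -> x != 1.
  move=> x Hx; apply/eqP => E; move: Hx; rewrite E dvdz1 /=.
  by apply/negP; rewrite neq_ltn prime_gt1 ?orbT.
have exr : exists i, ~~ (p%:Z %| r`_i)%Z by exists m; apply/negP => /np1; rewrite rm eqxx.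
have exs : exists i, ~~ (p%:Z %| s`_i)%Z by exists n; apply/negP => /np1; rewrite sn eqxx.
case: (ex_minnP exr) => i Hi Hmi.
case: (ex_minnP exs) => j Hj Hmj.
have im : (i <= m)%N by apply: Hmi; apply/negP => /np1; rewrite rm eqxx.
have jn : (j <= n)%N by apply: Hmj; apply/negP => /np1; rewrite sn eqxx.
have Hc : ~~ (p%:Z %| (r * s)`_(i + j))%Z.
  rewrite coefM.
  have Hk : (i < (i + j).+1)%N by lia.
  rewrite (bigD1 (Ordinal Hk)) //= addKn.
  apply/negP => Hd.
  have Hrest : (p%:Z %| \sum_(k < (i + j).+1 | k != Ordinal Hk) r`_k * s`_(i + j - k))%Z.
    apply: rpred_sum => k kne.
    case: (ltngtP k i) => [ki|ik|E].
    - apply: dvdz_mulr; apply: contraLR ki => /Hmi; rewrite -leqNgt //.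
    - apply: dvdz_mull; case: (boolP (p%:Z %| s`_(i + j - k))%Z) => // /Hmj.
      have := ltn_ord k; lia.
    - by exfalso; move: kne => /eqP; apply; apply: val_inj.
  have : (p%:Z %| r`_i * s`_j)%Z.
    by have := rpredB Hd Hrest; rewrite addrK.
  rewrite dvdzE abszM Euclid_dvdM // -!dvdzE.
  by case/orP => Hx; [move/negP: Hi | move/negP: Hj].
have ij : (m + n <= i + j)%N.
  by rewrite leqNgt; apply/negP => /Hlow; apply/negP.
have Ei : i = m by move: im jn ij; clear; lia.
have Ej : j = n by move: im jn ij; clear; lia.
have r0 : (p%:Z %| r`_0)%Z.
  by case: (boolP (p%:Z %| r`_0)%Z) => // /Hmi; rewrite Ei leqNgt m0.
have s0 : (p%:Z %| s`_0)%Z.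
  by case: (boolP (p%:Z %| s`_0)%Z) => // /Hmj; rewrite Ej leqNgt n0.
by move/negP: H0; apply; rewrite coef0M dvdz_mul.
Qed.


Lemma prod_bound (s : seq algC) : all (fun c => `|c| == 1) s ->
  (0 < size s)%N ->
  `|(\prod_(c <- s) ('X - c%:P))`_(size s).-1| <= (size s)%:R.
Proof.
elim: s => [|c s IH] //= /andP [/eqP nc Hs] _.
rewrite big_cons mulrBl coefB coefXM coefCM.
have mP : (\prod_(c <- s) ('X - c%:P)) \is monic by apply: monic_prod_XsubC.
have P1 : (\prod_(c <- s) ('X - c%:P))`_(size s) = 1.
  by have := monicP mP; rewrite lead_coefE size_prod_XsubC.
rewrite P1 mulr1.
case: s IH Hs mP P1 => [|c' s] IH Hs mP P1 /=.
  by rewrite sub0r normrN nc.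
apply: (le_trans (ler_normB _ _)); rewrite nc -addn1 natrD lerD2r.
exact: IH.
Qed.

Lemma cyc_bound n g : (0 < n)%N -> size 'Phi_n = (2 * g).+1 -> (0 < g)%N ->
  (`|('Phi_n)`_(2 * g).-1| <= (2 * g)%:Z)%R.
Proof.
move=> n0 sz g0.
have [z pz] := C_prim_root_exists n0.
have E := Cintr_Cyclotomic pz.
have nz : `|z| = 1.
  have := prim_expr_order pz => /(congr1 (fun x => `|x|)); rewrite normrX normr1.
  by move/eqP; rewrite pexpr_eq1 // => /eqP.
set s := [seq z ^+ (val k) | k <- [seq k : 'I_n <- index_enum 'I_n | coprime k n]].
have Es : cyclotomic z n = \prod_(c <- s) ('X - c%:P).
  by rewrite /s big_map big_filter /cyclotomic.
have ss : size s = (2 * g)%N.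
  have := size_prod_XsubC s id; rewrite -Es -E size_map_inj_poly ?sz //; last exact: intr_inj.
  by case.
have Hs : all (fun c => `|c| == 1) s.
  by apply/allP => c /mapP [k _ ->]; rewrite normrX nz expr1n.
have := prod_bound Hs; rewrite ss -Es -E coef_map /= -intr_norm.
rewrite -(ler_int algC) => H; apply: H; lia.
Qed.


Lemma symp_dec f : symplectic f -> exists m, size f = (2 * m).+1 /\
  exists r : {poly int}, (size r <= m.+1)%N /\ r`_m = 1 /\ f = S m r.
Proof.
move=> [mf [evf pal]].
have f0 : f != 0 by apply: monic_neq0.
set m := ((size f).-1)./2.
have E2 : (size f).-1 = (2 * m)%N.
  by have := odd_double_half (size f).-1; rewrite (negbTE evf) add0n -mul2n.
have Esz : size f = (2 * m).+1.
  by rewrite -E2 prednK // size_poly_gt0.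
exists m; split => //.
have HE : EP (2 * m) f.
  apply: EP_of_pal; first by rewrite Esz.
  by move=> k kn; rewrite -E2; apply: pal; rewrite E2.
have [r [sr [rm Ef]]] := S_exists HE.
exists r; split => //; split => //.
by rewrite rm -E2 -lead_coefE (monicP mf).
Qed.

Unset Implicit Arguments.

Theorem proposition3p5 (p : nat) (g : nat) (a : nat -> int) :
  prime p -> (0 < g)%N ->
  (2 * g)%:Z < `|a g.-1 * p%:Z| ->
  ~~ (p%:Z %| a 0%N)%Z ->
  homological_criterion
    (symp ('X^g + \sum_(i < g) (a i * p%:Z) *: 'X^i)).
Proof.
move=> pp g0 Hbig Ha0.
set q := 'X^g + \sum_(i < g) (a i * p%:Z) *: 'X^i.
have Eq : q = 'X^g + \poly_(i < g) (a i * p%:Z) by rewrite poly_def.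
have qg : q`_g = 1 by rewrite Eq coefD coefXn eqxx coef_poly ltnn addr0.
have qlow : forall i, (i < g)%N -> q`_i = a i * p%:Z.
  move=> i ig; rewrite Eq coefD coefXn coef_poly ig.
  have -> : (i == g) = false by move: ig; clear; lia.
  by rewrite add0r.
have qsz : size q = g.+1.
  by rewrite Eq size_polyDl size_polyXn // ltnS size_poly.
have Esym : symp q = S g q by rewrite /symp qsz.
rewrite Esym; set F := S g q.
have Ftop : F`_(2 * g) = 1 by rewrite /F S_top qg.
have Fsz : size F = (2 * g).+1.
  apply/eqP; rewrite eqn_leq S_size /= ltnNge; apply/negP => H.
  by move: Ftop; rewrite nth_default.
have Fmonic : F \is monic by rewrite monicE lead_coefE Fsz Ftop.
have FEP : EP (2 * g) F.
  split; first by rewrite Fsz.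
  move=> x x0; have x0' : x != 0 by rewrite gt_eqF.
  rewrite /F !evS ?invr_eq0 ?qsz // invrK addrC.
  rewrite mul2n -addnn exprD exprVn; field.
  by rewrite expf_neq0.
have Fsymp : symplectic F.
  split => //; split; first by rewrite Fsz /= oddM.
  by move=> i; rewrite Fsz /= => hi; apply: (pal_of_EP FEP).
have Fsub : F`_(2 * g).-1 = a g.-1 * p%:Z.
  move: g0 qlow; rewrite /F; case: (g) => [//|g'] _ ql.
  have -> : ((2 * g'.+1).-1 = (2 * g').+1)%N by clear; lia.
  by rewrite S_sub ql.
split.
  split => //; split; first by rewrite Fsz; move: g0; clear; lia.
  move=> [f [h [sf [sh [f1 [h1 Efh]]]]]].
  have [m [szf [r [sr [rm Ef]]]]] := symp_dec sf.
  have [n [szh [s [ss [sn Eh]]]]] := symp_dec sh.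
  have m0 : (0 < m)%N by move: f1; rewrite szf; clear; lia.
  have n0 : (0 < n)%N by move: h1; rewrite szh; clear; lia.
  have gmn : g = (m + n)%N.
    move: Fsz; rewrite Efh size_mul ?szf ?szh; first by clear; lia.
      by apply: monic_neq0; case: sf.
    by apply: monic_neq0; case: sh.
  have Eqrs : q = r * s.
    apply/eqP; rewrite -subr_eq0; apply/eqP; apply: (@S_inj0 g).
      apply: (leq_trans (size_add _ _)); rewrite geq_max qsz leqnn /= size_opp.
      apply: (leq_trans (size_mul_leq _ _)); rewrite -subn1 leq_subLR; apply: (leq_trans (leq_add sr ss)); rewrite gmn; clear; lia.
    by rewrite S_lin -/F Efh Ef Eh S_mul // gmn subrr.
  apply: (@eisen p r s m n) => //.
    move=> i; rewrite -gmn -Eqrs => ig; rewrite qlow //.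
    by apply: dvdz_mull; apply: dvdzz.
  rewrite -Eqrs qlow // dvdz_mul2r //.
  by move: (prime_gt0 pp); clear; lia.
split.
  move=> [n n0 EF].
  have szP : size 'Phi_n = (2 * g).+1 by rewrite -EF.
  have := cyc_bound n0 szP g0.
  by rewrite -EF Fsub leNgt Hbig.
move=> k k1 [r Er].
have k0 : (0 < k)%N by move: k1; clear; lia.
have d1 : (k %| 2 * g)%N.
  move: Ftop; rewrite Er coef_comp_poly_Xn //; case: ifP => // _ /esym/eqP.
have d2 : (k %| (2 * g).-1)%N.
  have : F`_(2 * g).-1 != 0.
    rewrite Fsub; apply/negP => /eqP E; move: Hbig; rewrite E normr0.
    by rewrite ltNge; apply/negP; apply/negP; rewrite lez_nat.
  rewrite Er coef_comp_poly_Xn //; case: ifP => //; by rewrite eqxx.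
have : (k %| 1)%N.
  have E : (2 * g = (2 * g).-1 + 1)%N by move: g0; clear; lia.
  by move: d1; rewrite E dvdn_addr.
rewrite dvdn1 => /eqP; move: k1; clear; lia.
Qed.
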